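(* For every $l\ge1$ and every positive integer $K$, $$c'_{l,K}\le \liminf_{n\to\infty} g(n)^{1/n}\le \limsup_{n\to\infty} g(n)^{1/n}\le c_{l,K}\cdot 2^{\eta_{l,K}},$$ where $$c'_{l,K}=\prod_{i=1}^K R'_l(i)^{\frac{1}{i(i+1)}\prod_{j=1}^l(1-\frac1{p_j})},\quad c_{l,K}=\prod_{i=1}^K R_l(i)^{\frac{1}{i(i+1)}\prod_{j=1}^l(1-\frac1{p_j})},$$ $$\eta_{l,K}=1-\sum_{i=1}^K\frac{1}{i(i+1)}\prod_{j=1}^l\left(1-\frac1{p_j}\right)|M_l(i)|.$$
   Context: A set of positive integers is primitive if no element divides another. $g(n)$ is the number of primitive subsets of $\{1,\dots,n\}$ (including the empty set). Let $p_1<p_2<\dots$ be the primes and $q=p_{l+1}$. $M_l$ is the set of positive integers all of whose prime factors lie in $\{p_1,\dots,p_l\}$, $M_l(x)=\{m\in M_l:m\le x\}$ ordered by divisibility. $R_l(i)$ is the number of antichains (including the empty one) of $M_l(i)$, and $R'_l(i)$ is the number of antichains of $M_l(i)$ all of whose elements are larger than $i/q$. *)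

(* Defs.v *)
From mathcomp Require Import all_boot.
From Stdlib Require Import Reals.

Set Implicit Arguments.
Unset Strict Implicit.
Unset Printing Implicit Defensive.

(* next prime after p: the first prime in p+1 .. p+p! (Euclid: such a prime exists). *)
Definition next_prime (p : nat) : nat :=
  head 0 [seq r <- iota p.+1 (p`!) | prime r].

(* nth_prime j = p_j (1-indexed): p_1 = 2, p_2 = 3, ... *)
Definition nth_prime (j : nat) : nat := iter j next_prime 1.

Definition inM (l m : nat) : bool :=
  (0 < m) && all (fun r => r \in [seq nth_prime j | j <- iota 1 l]) (primes m).

Definition primitive_set (i : nat) (A : {set 'I_i.+1}) : bool :=
  [forall x in A, forall y in A, ((x : nat) %| y) ==> (x == y)].

Definition n_antichains (i : nat) (P : nat -> bool) : nat :=
  #|[set A : {set 'I_i.+1} |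
      [forall x in A, (0 < (x : nat)) && P x] && primitive_set A]|.

Definition g (n : nat) : nat := n_antichains n (fun _ => true).

Definition R_l (l i : nat) : nat := n_antichains i (inM l).

(* R'_l(i): antichains of M_l(i) with all elements > i/q, q = p_{l+1};
   m > i/q  <=>  i < m*q *)
Definition R'_l (l i : nat) : nat :=
  n_antichains i (fun m => inM l m && (i < m * nth_prime l.+1)).

Definition card_M (l i : nat) : nat :=
  #|[set m : 'I_i.+1 | inM l m]|.

Open Scope R_scope.

Fixpoint prod1 (f : nat -> R) (K : nat) : R :=
  match K with O => 1 | S k => prod1 f k * f (S k) end.

Fixpoint sum1 (f : nat -> R) (K : nat) : R :=
  match K with O => 0 | S k => sum1 f k + f (S k) end.

Definition dens (l : nat) : R := prod1 (fun j => 1 - / INR (nth_prime j)) l.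

Definition expo (l i : nat) : R := / (INR i * INR (S i)) * dens l.

Definition c_lK (l K : nat) : R :=
  prod1 (fun i => Rpower (INR (R_l l i)) (expo l i)) K.

Definition c'_lK (l K : nat) : R :=
  prod1 (fun i => Rpower (INR (R'_l l i)) (expo l i)) K.

Definition eta_lK (l K : nat) : R :=
  1 - sum1 (fun i => expo l i * INR (card_M l i)) K.

Definition groot (n : nat) : R := Rpower (INR (g n)) (/ INR n).

Close Scope R_scope.

(* Main.v *)
Require Import Defs.
From mathcomp Require Import all_boot zify.
Set Implicit Arguments. Unset Strict Implicit. Unset Printing Implicit Defensive.

Lemma head_filter_min a k r :
  r \in [seq x <- iota a k | prime x] -> head 0 [seq x <- iota a k | prime x] <= r.
Proof.
elim: k a => [|k IH] a //=.
case: ifP => pa /=.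
  by rewrite inE => /orP[/eqP->//|]; rewrite mem_filter mem_iota => /andP[_ /andP[h _]]; lia.
exact: IH.
Qed.

Lemma next_prime_spec p : 0 < p ->
  [/\ prime (next_prime p), p < next_prime p &
      forall r, prime r -> p < r -> next_prime p <= r].
Proof.
move=> p0; rewrite /next_prime.
set s := [seq x <- iota p.+1 p`! | prime x].
have [r pr rd] : {r | prime r & r %| p`! + 1} by apply: pdivP; rewrite addn1 ltnS fact_gt0.
have pr' : p < r.
  rewrite ltnNge; apply/negP => rp.
  move: rd; rewrite dvdn_addr ?dvdn_fact ?prime_gt0 // gtnNdvd ?prime_gt1 //.
have rle : r <= p`! + 1 by apply: dvdn_leq; rewrite // addn1.
have rs : r \in s by rewrite mem_filter pr mem_iota /=; apply/andP; split; [exact: pr' | idtac]; move: rle p0; clear; lia.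
have hs : head 0 s \in s by case: s rs => //= x s' _; rewrite mem_head.
move: (hs); rewrite mem_filter mem_iota => /andP[ph /andP[h1 _]].
split => // r' pr'' pr1.
have [lt|ge] := ltnP r' (head 0 s); last by [].
have : r' \in s.
  rewrite mem_filter pr'' mem_iota; apply/andP; split => //.
  have := head_filter_min rs; rewrite -/s; lia.
by move/head_filter_min; rewrite leqNgt lt.
Qed.

Lemma nth_prime_S j : nth_prime j.+1 = next_prime (nth_prime j).
Proof. by []. Qed.

Lemma nth_prime_pos j : 0 < nth_prime j /\ (0 < j -> prime (nth_prime j)).
Proof.
elim: j => [|j [IH _]]; first by [].
have [h _ _] := next_prime_spec IH.
by rewrite nth_prime_S; split => //; exact: prime_gt0.
Qed.

Lemma nth_prime_prime j : 0 < j -> prime (nth_prime j).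
Proof. by case: (nth_prime_pos j). Qed.

Lemma nth_prime_lt j : nth_prime j < nth_prime j.+1.
Proof. by have [_ h _] := next_prime_spec (proj1 (nth_prime_pos j)). Qed.

Lemma nth_prime_mono i j : i <= j -> nth_prime i <= nth_prime j.
Proof.
elim: j => [|j IH]; first by rewrite leqn0 => /eqP->.
rewrite leq_eqVlt => /orP[/eqP->//|]; rewrite ltnS => /IH h.
exact: leq_trans h (ltnW (nth_prime_lt j)).
Qed.

Definition Sl (l : nat) : seq nat := [seq nth_prime j | j <- iota 1 l].

Lemma S_prime l r : r \in Sl l -> prime r.
Proof. by case/mapP => j; rewrite mem_iota => /andP[h _] ->; apply: nth_prime_prime. Qed.

Lemma S_le l r : r \in Sl l -> r <= nth_prime l.
Proof.
case/mapP => j; rewrite mem_iota => /andP[_ h] ->; apply: nth_prime_mono; lia.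
Qed.

Lemma primes_below j r : prime r -> r < nth_prime j.+1 -> r \in Sl j.
Proof.
move=> pr; elim: j => [|j IH] h.
  have [_ _ m] := next_prime_spec (isT : 0 < 1).
  have := prime_gt1 pr => r1; have := m r pr r1; move: h; rewrite /nth_prime /=; lia.
have rle : r <= nth_prime j.+1.
  rewrite leqNgt; apply/negP => lt.
  have [_ _ m] := next_prime_spec (proj1 (nth_prime_pos j.+1)).
  have := m r pr lt; move: h; rewrite nth_prime_S; lia.
move: rle; rewrite leq_eqVlt => /orP[/eqP->|/IH].
  by apply/mapP; exists j.+1 => //; rewrite mem_iota; lia.
by case/mapP => i; rewrite mem_iota => hi ->; apply/mapP; exists i => //; rewrite mem_iota; lia.
Qed.

Lemma rough_prime_ge l r : prime r -> r \notin Sl l -> nth_prime l.+1 <= r.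
Proof.
move=> pr nS; rewrite leqNgt; apply/negP => h; by rewrite (primes_below pr h) in nS.
Qed.

Lemma S_rcons l : Sl l.+1 = rcons (Sl l) (nth_prime l.+1).
Proof. by rewrite /Sl -[l.+1]addn1 iotaD map_cat cats1 add1n /= addn1. Qed.

Definition PP (l : nat) : nat := \prod_(r <- Sl l) r.

Lemma PP_gt0 l : 0 < PP l.
Proof. rewrite /PP big_seq; apply: prodn_cond_gt0 => r rS; exact: prime_gt0 (S_prime rS). Qed.

Lemma PP_S l : PP l.+1 = PP l * nth_prime l.+1.
Proof. by rewrite /PP S_rcons -cats1 big_cat big_seq1. Qed.

Lemma notin_S l : nth_prime l.+1 \notin Sl l.
Proof. apply/negP => /S_le; rewrite leqNgt nth_prime_lt //. Qed.

Lemma dvd_PP l r : prime r -> (r %| PP l) = (r \in Sl l).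
Proof.
move=> pr; elim: l => [|l IH]; first by rewrite /PP /= big_nil dvdn1; case: eqP => // e; move: pr; rewrite e.
rewrite PP_S Euclid_dvdM // IH S_rcons -cats1 mem_cat mem_seq1 dvdn_prime2 //.
exact: nth_prime_prime.
Qed.

Lemma coprime_PP_S l : coprime (PP l) (nth_prime l.+1).
Proof.
rewrite coprime_sym prime_coprime ?nth_prime_prime // dvd_PP ?nth_prime_prime //.
exact: notin_S.
Qed.

Lemma totient_PP l : totient (PP l) = \prod_(r <- Sl l) r.-1.
Proof.
elim: l => [|l IH]; first by rewrite /PP /= !big_nil.
rewrite PP_S totient_coprime ?coprime_PP_S // IH totient_prime ?nth_prime_prime //.
by rewrite S_rcons -cats1 big_cat big_seq1.
Qed.

Definition piS (l : nat) : nat_pred := [pred r | r \in Sl l].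

Lemma inM_pnat l m : inM l m = (piS l).-nat m.
Proof. by []. Qed.

Lemma coprime_rough l m : 0 < m -> coprime m (PP l) = (piS l)^'.-nat m.
Proof.
move=> m0; rewrite coprime_sym coprime_pi' ?PP_gt0 //.
apply: eq_pnat => r; rewrite /negn /pi_of /piS !inE mem_primes PP_gt0 /=.
case pr: (prime r) => /=; first by rewrite dvd_PP.
by case rS: (r \in Sl l) => //; move: (S_prime rS); rewrite pr.
Qed.

Section AC.
Variables (T : finType) (r : rel T).
Definition ac (D : {set T}) : {set {set T}} :=
  [set A : {set T} | (A \subset D) && [forall x in A, forall y in A, r x y ==> (x == y)]].

Lemma ac_sub (D D' A B : {set T}) : A \in ac D -> B \subset A -> B \subset D' -> B \in ac D'.
Proof.
rewrite !inE => /andP[_ /forall_inP h] BA ->; apply/forall_inP => x xB.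
apply/forall_inP => y yB; have := h x (subsetP BA x xB) => /forall_inP; apply.
exact: subsetP BA y yB.
Qed.

Lemma ac_mono (D1 D2 : {set T}) : D1 \subset D2 -> #|ac D1| <= #|ac D2|.
Proof.
move=> s; apply: subset_leq_card; apply/subsetP => A hA.
apply: (ac_sub hA) => //; apply: subset_trans s; by move: hA; rewrite inE => /andP[].
Qed.

Lemma ac_pow (D : {set T}) : #|ac D| <= 2 ^ #|D|.
Proof.
rewrite -card_powerset; apply: subset_leq_card; apply/subsetP => A.
by rewrite powersetE inE => /andP[].
Qed.

Lemma ac_split_le (D E : {set T}) : #|ac D| <= #|ac (D :&: E)| * #|ac (D :\: E)|.
Proof.
rewrite -cardsX.
have inj : {in ac D &, injective (fun A => (A :&: E, A :\: E))}.
  move=> A B _ _ [h1 h2]; by rewrite -(setID A E) -(setID B E) h1 h2.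
rewrite -(card_in_imset inj); apply: subset_leq_card; apply/subsetP => p /imsetP[A hA ->].
rewrite inE /=; apply/andP; split.
  by apply: (ac_sub hA); [exact: subsetIl | apply: setSI; move: hA; rewrite inE => /andP[]].
by apply: (ac_sub hA); [exact: subsetDl | apply: setSD; move: hA; rewrite inE => /andP[]].
Qed.

Lemma ac_split_ge (D E : {set T}) :
  (forall x y, x \in D :&: E -> y \in D :\: E -> ~~ r x y && ~~ r y x) ->
  #|ac (D :&: E)| * #|ac (D :\: E)| <= #|ac D|.
Proof.
move=> inc; rewrite -cardsX.
have inj : {in setX (ac (D :&: E)) (ac (D :\: E)) &, injective (fun p => p.1 :|: p.2)}.
  move=> [B C] [B' C']; rewrite !inE /= => /andP[/andP[hB _] /andP[hC _]].
  move=> /andP[/andP[hB' _] /andP[hC' _]] e.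
  have key : forall X Y : {set T}, X \subset D :&: E -> Y \subset D :\: E ->
      X = (X :|: Y) :&: E /\ Y = (X :|: Y) :\: E.
    move=> X Y hX hY; split; apply/setP => x; rewrite !inE;
    move: (subsetP hX x) (subsetP hY x); rewrite !inE;
    case: (x \in X); case: (x \in Y); case: (x \in E); case: (x \in D); simpl; move=> h1 h2; try done; first [ by move: (h1 isT) | by move: (h2 isT) ].
  have [e1 e2] := key _ _ hB hC; have [e1' e2'] := key _ _ hB' hC'.
  by congr pair; [rewrite /= e1 e1' e | rewrite /= e2 e2' e].
rewrite -(card_in_imset inj); apply: subset_leq_card; apply/subsetP => A /imsetP[[B C] hp ->] /=.
move: hp; rewrite !inE /= => /andP[/andP[hB aB] /andP[hC aC]].
apply/andP; split.
  apply/subsetP => x; rewrite inE => /orP[/(subsetP hB)|/(subsetP hC)]; rewrite !inE => /andP[] //.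
apply/forall_inP => x; rewrite inE => hx; apply/forall_inP => y; rewrite inE => hy.
apply/implyP => rxy.
case/orP: hx => [xB|xC]; case/orP: hy => [yB|yC].
- by move/forall_inP: aB => /(_ x xB) /forall_inP /(_ y yB) /implyP; apply.
- by have := inc x y (subsetP hB x xB) (subsetP hC y yC); rewrite rxy.
- by have := inc y x (subsetP hB y yB) (subsetP hC x xC); rewrite rxy andbF.
- by move/forall_inP: aC => /(_ x xC) /forall_inP /(_ y yC) /implyP; apply.
Qed.
End AC.

Lemma ac_inj (T1 T2 : finType) (r1 : rel T1) (r2 : rel T2) (D1 : {set T1}) (D2 : {set T2})
  (f : T1 -> T2) :
  {in D1 &, injective f} -> f @: D1 \subset D2 ->
  {in D1 &, forall x y, r2 (f x) (f y) -> r1 x y} -> #|ac r1 D1| <= #|ac r2 D2|.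
Proof.
move=> inj sub refl.
have inj' : {in ac r1 D1 &, injective (fun A : {set T1} => f @: A)}.
  move=> A B; rewrite !inE => /andP[hA _] /andP[hB _] e.
  apply/setP => x; apply/idP/idP => hx.
    have : f x \in f @: B by rewrite -e; apply: imset_f.
    case/imsetP => y yB ey; by rewrite (inj x y (subsetP hA x hx) (subsetP hB y yB) ey).
  have : f x \in f @: A by rewrite e; apply: imset_f.
  case/imsetP => y yA ey; by rewrite (inj x y (subsetP hB x hx) (subsetP hA y yA) ey).
rewrite -(card_in_imset inj'); apply: subset_leq_card; apply/subsetP => B /imsetP[A hA ->].
move: hA; rewrite !inE => /andP[hA aA]; apply/andP; split.
  by apply: subset_trans sub; apply: imsetS.
apply/forall_inP => u /imsetP[x xA ->]; apply/forall_inP => v /imsetP[y yA ->].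
apply/implyP => h; have := refl x y (subsetP hA x xA) (subsetP hA y yA) h => rxy.
by move/forall_inP: aA => /(_ x xA) /forall_inP /(_ y yA) /implyP /(_ rxy) /eqP ->.
Qed.

Lemma card_inj (T1 T2 : finType) (D1 : {set T1}) (D2 : {set T2}) (f : T1 -> T2) :
  {in D1 &, injective f} -> f @: D1 \subset D2 -> #|D1| <= #|D2|.
Proof. by move=> inj sub; rewrite -(card_in_imset inj); apply: subset_leq_card. Qed.

Definition dv (i : nat) : rel 'I_i.+1 := fun x y => (x : nat) %| y.

Lemma NA_ac i P : n_antichains i P = #|ac (@dv i) [set x : 'I_i.+1 | (0 < x) && P x]|.
Proof.
apply: eq_card => A; rewrite !inE; congr andb.
apply/forall_inP/subsetP => h x xA; first by rewrite inE; exact: h.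
by move: (h x xA); rewrite inE.
Qed.

Section Blocks.
Variables (l n : nat).
Local Notation pi := (piS l).
Local Notation q := (nth_prime l.+1).
Definition sm (x : nat) := x`_pi.
Definition be (x : nat) := x`_pi^'.

Lemma decomp x : 0 < x -> x = sm x * be x.
Proof. by move=> x0; rewrite /sm /be partnC. Qed.

Lemma sm_gt0 x : 0 < sm x. Proof. exact: part_gt0. Qed.
Lemma be_gt0 x : 0 < be x. Proof. exact: part_gt0. Qed.
Lemma sm_pnat x : pi.-nat (sm x). Proof. exact: part_pnat. Qed.
Lemma be_pnat x : pi^'.-nat (be x). Proof. exact: part_pnat. Qed.

Lemma partsM a m : pi.-nat a -> pi^'.-nat m -> sm (m * a) = a /\ be (m * a) = m.
Proof.
move=> ha hm; have a0 : 0 < a by case/andP: ha.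
have m0 : 0 < m by case/andP: hm.
rewrite /sm /be !partnM // part_p'nat // part_pnat_id // part_pnat_id //.
rewrite part_p'nat ?pnatNK //; split; lia.
Qed.

Definition Bk m := [set x : 'I_n.+1 | (0 < x) && (be x == m)].
Definition Bk' m := [set x : 'I_n.+1 | (0 < x) && (be x == m) && (n %/ m < sm x * q)].

Lemma Bk_le m : 0 < m -> #|ac (@dv n) (Bk m)| <= R_l l (n %/ m).
Proof.
move=> m0; rewrite /R_l NA_ac.
have key : forall x : 'I_n.+1, x \in Bk m -> sm x <= n %/ m /\ x = sm x * m :> nat.
  move=> x; rewrite inE => /andP[x0 /eqP bx].
  have e := decomp x0; rewrite bx in e; split => //.
  by rewrite leq_divRL // -e; have := ltn_ord x; lia.
apply: (ac_inj (f := fun x : 'I_n.+1 => (inord (sm x) : 'I_(n %/ m).+1))).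
- move=> x y hx hy /(congr1 val) /=; have [kx ex] := key x hx; have [ky ey] := key y hy.
  rewrite !inordK ?ltnS // => e; apply: val_inj; by rewrite /= ex ey e.
- apply/subsetP => a /imsetP[x hx ->]; have [kx _] := key x hx.
  by rewrite inE inordK ?ltnS // sm_gt0 inM_pnat sm_pnat.
- move=> x y hx hy; have [kx ex] := key x hx; have [ky ey] := key y hy.
  rewrite /dv !inordK ?ltnS // => h; by rewrite ex ey dvdn_mul.
Qed.

Lemma Bk'_ge m : pi^'.-nat m -> R'_l l (n %/ m) <= #|ac (@dv n) (Bk' m)|.
Proof.
move=> hm; have m0 : 0 < m by case/andP: hm.
rewrite /R'_l NA_ac.
have key : forall a : 'I_(n %/ m).+1, m * a <= n.
  move=> a; have := ltn_ord a; rewrite ltnS leq_divRL // => h; lia.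
apply: (ac_inj (f := fun a : 'I_(n %/ m).+1 => (inord (m * a) : 'I_n.+1))).
- move=> x y _ _ /(congr1 val) /=; rewrite !inordK ?ltnS ?key // => e.
  apply: val_inj => /=; move/eqP: e; rewrite eqn_mul2l => /orP[/eqP|/eqP] //; lia.
- apply/subsetP => x /imsetP[a]; rewrite inE => /andP[a0 /andP[ha hq]] ->.
  rewrite inM_pnat in ha; have [e1 e2] := partsM ha hm.
  rewrite inE inordK ?ltnS ?key // e1 e2 eqxx hq muln_gt0 m0 a0 //.
- move=> x y _ _; rewrite /dv !inordK ?ltnS ?key // dvdn_pmul2l //.
Qed.

Lemma card_Bk m : pi^'.-nat m -> card_M l (n %/ m) <= #|Bk m|.
Proof.
move=> hm; have m0 : 0 < m by case/andP: hm.
have key : forall a : 'I_(n %/ m).+1, m * a <= n.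
  move=> a; have := ltn_ord a; rewrite ltnS leq_divRL // => h; lia.
apply: (card_inj (f := fun a : 'I_(n %/ m).+1 => (inord (m * a) : 'I_n.+1))).
- move=> x y _ _ /(congr1 val) /=; rewrite !inordK ?ltnS ?key // => e.
  apply: val_inj => /=; move/eqP: e; rewrite eqn_mul2l => /orP[/eqP|/eqP] //; lia.
- apply/subsetP => x /imsetP[a]; rewrite inE => ha ->.
  rewrite inM_pnat in ha; have a0 : 0 < a by case/andP: ha.
  have [e1 e2] := partsM ha hm.
  by rewrite inE inordK ?ltnS ?key // e2 eqxx muln_gt0 m0 a0.
Qed.

Lemma incomp (x y : nat) : 0 < x -> 0 < y -> y <= n -> be x != be y ->
  n %/ be x < sm x * q -> ~~ (x %| y).
Proof.
move=> x0 y0 yn ne hx; apply/negP => d.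
have d1 : be x %| be y by apply: partn_dvd.
have d2 : sm x %| sm y by apply: partn_dvd.
set t := be y %/ be x.
have et : be y = be x * t by rewrite /t mulnC divnK.
have t0 : 0 < t by move: (be_gt0 y); rewrite et muln_gt0 => /andP[].
have t1 : 1 < t.
  case: t et t0 => [|[|t']] //= et _; by move: ne; rewrite et muln1 eqxx.
have rt : pi^'.-nat t by apply: pnat_dvd (be_pnat y); rewrite et dvdn_mull.
have pr := pdiv_prime t1.
have pin : pdiv t \in pi^' by apply: pnatPpi rt _; rewrite pi_pdiv.
have qle : q <= pdiv t.
  apply: rough_prime_ge pr _; by move: pin; rewrite /negn inE /=.
have tle : pdiv t <= t by apply: pdiv_leq.
have sle : sm x <= sm y by apply: dvdn_leq (sm_gt0 y) d2.
move: hx; rewrite ltn_divLR ?be_gt0 // => hx.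
have ey := decomp y0; rewrite et in ey.
have : sm x * q * be x <= y.
  rewrite ey mulnA -(mulnAC (sm y)) leq_mul // leq_mul //; lia.
lia.
Qed.

Definition U (p : pred nat) := [set x : 'I_n.+1 | (0 < x) && p (be x)].
Definition L (p : pred nat) := [set x : 'I_n.+1 | (0 < x) && p (be x) && (n %/ be x < sm x * q)].


Lemma ac_set0 (T : finType) (r : rel T) : #|ac r set0| <= 1.
Proof. by have := ac_pow r (set0 : {set T}); rewrite cards0. Qed.

Lemma U_prod s (Q : pred nat) : all (fun m => 0 < m) s ->
  #|ac (@dv n) (U [pred b | (b \in s) && Q b])| <= \prod_(m <- s | Q m) R_l l (n %/ m).
Proof.
elim: s => [|m s IH] /=.
  move=> _; rewrite big_nil; apply: leq_trans (ac_set0 _); apply: ac_mono.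
  by apply/subsetP => x; rewrite !inE andbF.
case/andP=> m0 hs; rewrite big_cons; case Qm: (Q m).
  apply: leq_trans (ac_split_le _ _ [set x : 'I_n.+1 | be x == m]) _.
  apply: leq_mul.
    apply: leq_trans (Bk_le m0); apply: ac_mono; apply/subsetP => x.
    by rewrite !inE => /andP[/andP[-> _] ->].
  apply: leq_trans (IH hs); apply: ac_mono; apply/subsetP => x.
  rewrite !inE => /and4P[ne -> /orP[e|->] ->] //; by rewrite e in ne.
apply: leq_trans (IH hs); apply: ac_mono; apply/subsetP => x.
rewrite !inE => /and3P[-> /orP[/eqP e|->] qb]; rewrite /= ?qb //; by rewrite e Qm in qb.
Qed.

Lemma U_card s (Q : pred nat) : uniq s -> all (fun m => pi^'.-nat m) s ->
  \sum_(m <- s | Q m) card_M l (n %/ m) <= #|U [pred b | (b \in s) && Q b]|.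
Proof.
elim: s => [|m s IH] /=; first by rewrite big_nil.
case/andP=> ms us /andP[hm hs]; rewrite big_cons.
rewrite -(cardsID [set x : 'I_n.+1 | be x == m]).
case Qm: (Q m).
  apply: leq_add.
    apply: leq_trans (card_Bk hm) _; apply: subset_leq_card; apply/subsetP => x.
    rewrite !inE => /andP[x0 /eqP e]; by rewrite x0 e eqxx Qm.
  apply: leq_trans (IH us hs) _; apply: subset_leq_card; apply/subsetP => x.
  rewrite !inE => /andP[-> /andP[bs ->]]; rewrite bs orbT /= andbT.
  by apply/eqP => e; move: ms; rewrite -e bs.
apply: leq_trans (IH us hs) (leq_trans _ (leq_addl _ _)); apply: subset_leq_card; apply/subsetP => x.
rewrite !inE => /andP[-> /andP[bs ->]]; rewrite bs orbT /= andbT.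
by apply/eqP => e; move: ms; rewrite -e bs.
Qed.

Lemma L_prod s (Q : pred nat) : uniq s -> all (fun m => pi^'.-nat m) s ->
  \prod_(m <- s | Q m) R'_l l (n %/ m) <= #|ac (@dv n) (L [pred b | (b \in s) && Q b])|.
Proof.
elim: s => [|m s IH] /=.
  move=> _ _; rewrite big_nil; apply/card_gt0P; exists set0.
  rewrite inE sub0set /=; apply/forall_inP => x; by rewrite inE.
case/andP=> ms us /andP[hm hs]; rewrite big_cons.
case Qm: (Q m).
  apply: leq_trans (ac_split_ge (E := [set x : 'I_n.+1 | be x == m]) _).
    apply: leq_mul.
      apply: leq_trans (Bk'_ge hm) _; apply: ac_mono; apply/subsetP => x.
      rewrite !inE => /andP[/andP[x0 /eqP e] hq]; by rewrite x0 e eqxx Qm hq.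
    apply: leq_trans (IH us hs) _; apply: ac_mono; apply/subsetP => x.
    rewrite !inE => /andP[/andP[-> /andP[bs ->]] ->]; rewrite bs orbT /= andbT.
    by apply/eqP => e; move: ms; rewrite -e bs.
  move=> x y; rewrite !inE => /andP[/andP[/and3P[x0 _ _] hx] /eqP ex] /and3P[ney /and3P[y0 _ _] hy].
  have ne : be x != be y by rewrite ex eq_sym.
  rewrite /dv; apply/andP; split.
    by apply: incomp => //; rewrite -ltnS ltn_ord.
  by apply: incomp; rewrite // 1?eq_sym // -ltnS ltn_ord.
apply: leq_trans (IH us hs) _; apply: ac_mono; apply/subsetP => x.
rewrite !inE => /andP[/andP[-> /andP[bs ->]] ->]; by rewrite bs orbT.
Qed.

End Blocks.

Lemma group_prod (r : seq nat) (Q : pred nat) (h F : nat -> nat) K :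
  (forall m, m \in r -> Q m -> 1 <= h m <= K) ->
  \prod_(m <- r | Q m) F (h m) =
  \prod_(1 <= i < K.+1) F i ^ (\sum_(m <- r) (Q m && (h m == i))).
Proof.
elim: r => [|m r IH] hr.
  by rewrite big_nil big1 // => i _; rewrite big_nil expn0.
rewrite big_cons IH; last by move=> m' hm'; apply: hr; rewrite inE hm' orbT.
rewrite [RHS](eq_bigr (fun i => F i ^ (Q m && (h m == i)) * F i ^ (\sum_(m0 <- r) (Q m0 && (h m0 == i))))); last by move=> i _; rewrite big_cons expnD.
rewrite big_split /=; case Qm: (Q m) => /=.
  have /andP[h1 h2] := hr m (mem_head _ _) Qm.
  congr (_ * _); symmetry.
  rewrite (bigD1_seq (h m)) ?mem_index_iota ?iota_uniq //=; last by lia.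
  rewrite eqxx expn1 big1 ?muln1 // => i /negPf; rewrite eq_sym => ->; by rewrite expn0.
by rewrite [X in _ = X * _]big1 ?mul1n // => i _; rewrite expn0.
Qed.

Lemma group_sum (r : seq nat) (Q : pred nat) (h F : nat -> nat) K :
  (forall m, m \in r -> Q m -> 1 <= h m <= K) ->
  \sum_(m <- r | Q m) F (h m) =
  \sum_(1 <= i < K.+1) (\sum_(m <- r) (Q m && (h m == i))) * F i.
Proof.
elim: r => [|m r IH] hr.
  by rewrite big_nil big1 // => i _; rewrite big_nil.
rewrite big_cons IH; last by move=> m' hm'; apply: hr; rewrite inE hm' orbT.
rewrite [RHS](eq_bigr (fun i => (Q m && (h m == i)) * F i + (\sum_(m0 <- r) (Q m0 && (h m0 == i))) * F i)); last by move=> i _; rewrite big_cons mulnDl.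
rewrite big_split /=; case Qm: (Q m) => /=.
  have /andP[h1 h2] := hr m (mem_head _ _) Qm.
  congr (_ + _); symmetry.
  rewrite (bigD1_seq (h m)) ?mem_index_iota ?iota_uniq //=; last by lia.
  rewrite eqxx mul1n big1 ?addn0 // => i /negPf; rewrite eq_sym => ->; by rewrite mul0n.
by rewrite [X in _ = X + _]big1 ?add0n // => i _; rewrite mul0n.
Qed.

Section Main.
Variables (l n K : nat).
Local Notation pi := (piS l).
Definition sr := [seq m <- iota 1 n | pi^'.-nat m].
Definition Qs := fun m => n %/ m <= K.
Definition NN (i : nat) := \sum_(m <- sr) (Qs m && (n %/ m == i)).

Lemma sr_uniq : uniq sr. Proof. by rewrite filter_uniq // iota_uniq. Qed.
Lemma sr_all : all (fun m => pi^'.-nat m) sr. Proof. exact: filter_all. Qed.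
Lemma sr_pos : all (fun m => 0 < m) sr.
Proof. by apply/allP => m; rewrite mem_filter mem_iota => /andP[_ /andP[]]. Qed.
Lemma sr_range m : m \in sr -> Qs m -> 1 <= n %/ m <= K.
Proof.
rewrite mem_filter mem_iota /Qs => /andP[_ /andP[h1 h2]] ->; rewrite andbT.
by rewrite leq_divRL //; lia.
Qed.

Lemma g_ac : g n = #|ac (@dv n) [set x : 'I_n.+1 | (0 < x) && true]|.
Proof. exact: NA_ac. Qed.

Lemma lower_nat : \prod_(1 <= i < K.+1) R'_l l i ^ NN i <= g n.
Proof.
rewrite /NN -(@group_prod sr Qs (fun m => n %/ m) (R'_l l) K); last exact: sr_range.
apply: leq_trans (@L_prod l n sr Qs sr_uniq sr_all) _.
rewrite g_ac; apply: ac_mono; apply/subsetP => x; by rewrite !inE => /andP[/andP[->]].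
Qed.

Lemma be_in_sr (x : 'I_n.+1) : 0 < x -> be l x \in sr.
Proof.
move=> x0; rewrite mem_filter be_pnat mem_iota be_gt0 /=.
have : be l x <= x by apply: dvdn_leq => //; apply: dvdn_part.
have := ltn_ord x; lia.
Qed.

Lemma upper_nat : g n * 2 ^ (\sum_(1 <= i < K.+1) NN i * card_M l i) <=
  (\prod_(1 <= i < K.+1) R_l l i ^ NN i) * 2 ^ n.
Proof.
rewrite /NN -(@group_prod sr Qs (fun m => n %/ m) (R_l l) K); last exact: sr_range.
rewrite -(@group_sum sr Qs (fun m => n %/ m) (card_M l) K); last exact: sr_range.
set D := [set x : 'I_n.+1 | (0 < x) && true].
set E := [set x : 'I_n.+1 | n %/ be l x <= K].
have eDE : D :&: E = U l n [pred b | (b \in sr) && Qs b].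
  apply/setP => x; rewrite !inE andbT; case x0: (0 < x) => //=.
  by rewrite be_in_sr.
have h1 := ac_split_le (@dv n) D E.
have h2 : #|ac (@dv n) (D :&: E)| <= \prod_(m <- sr | Qs m) R_l l (n %/ m).
  by rewrite eDE; apply: U_prod; exact: sr_pos.
have h3 := ac_pow (@dv n) (D :\: E).
have h4 : \sum_(m <- sr | Qs m) card_M l (n %/ m) <= #|D :&: E|.
  by rewrite eDE; apply: U_card; [exact: sr_uniq | exact: sr_all].
have h5 := cardsID E D.
have h6 : #|D| <= n.
  have : D \subset [set~ ord0] by apply/subsetP => x; rewrite !inE andbT; apply: contraTneq => ->.
  by move/subset_leq_card; rewrite cardsC1 card_ord.
rewrite g_ac; apply: leq_trans (leq_mul h1 (leqnn _)) _.
rewrite -mulnA; apply: leq_mul h2 _.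
apply: leq_trans (leq_mul h3 (leqnn _)) _.
rewrite -expnD; apply: leq_pexp2l => //; lia.
Qed.

End Main.

Section Count.
Variable P : nat.
Hypothesis P0 : 0 < P.
Definition Dc (x : nat) := \sum_(0 <= m < x) coprime m P.

Lemma sum_bool_le (a b : nat) (f : nat -> bool) : \sum_(a <= m < b) f m <= b - a.
Proof.
apply: leq_trans (_ : \sum_(a <= m < b) 1 <= _); first by apply: leq_sum => m _; case: (f m).
by rewrite sum_nat_const_nat muln1.
Qed.

Lemma Dc_le x : Dc x <= x.
Proof. by have := sum_bool_le 0 x (fun m => coprime m P); rewrite subn0. Qed.

Lemma tot_le : totient P <= P.
Proof.
rewrite totient_count_coprime; have := sum_bool_le 0 P (coprime P); by rewrite subn0.
Qed.

Lemma Dc_period x : Dc (x + P) = Dc x + totient P.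
Proof.
rewrite /Dc addnC (big_cat_nat _ (n := P)) //=; last by rewrite leq_addr.
rewrite addnC; congr (_ + _); last first.
  by rewrite totient_count_coprime; apply: eq_bigr => m _; rewrite coprime_sym.
rewrite -{1}[P]add0n big_addn (addnC P x) addnK; apply: eq_bigr => m _.
by rewrite -coprime_modl modnDr coprime_modl.
Qed.

Lemma Dc_kP r k : Dc (r + k * P) = Dc r + k * totient P.
Proof.
elim: k => [|k IH]; first by rewrite !mul0n !addn0.
by rewrite mulSn (addnC P) addnA Dc_period IH mulSn; lia.
Qed.

Lemma Dc_bounds x : Dc x * P <= x * totient P + P * P /\ x * totient P <= Dc x * P + P * P.
Proof.
have ex := divn_eq x P; set k := x %/ P in ex; set r := x %% P in ex.
have rP : r < P by rewrite ltn_mod.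
have e : Dc x = Dc r + k * totient P by rewrite ex addnC Dc_kP.
have h1 := Dc_le r; have h2 := tot_le.
rewrite e ex; split; nia.
Qed.

End Count.

Lemma sum_window (c : nat -> bool) a b N : a <= b -> b <= N ->
  \sum_(1 <= m < N.+1) (c m && (a < m <= b)) = \sum_(a.+1 <= m < b.+1) c m.
Proof.
move=> ab bN.
rewrite (big_cat_nat _ (n := a.+1)) //=; try lia.
rewrite (big_cat_nat _ (n := b.+1) (m := a.+1)) //=; try lia.
rewrite big1_seq ?add0n; last first.
  move=> m; rewrite mem_index_iota => /andP[_ ma].
  have -> : (a < m <= b) = false by apply/negbTE/negP => /andP; lia.
  by rewrite andbF.
rewrite [X in _ + X]big1_seq ?addn0; last first.
  move=> m; rewrite mem_index_iota => /and3P[_ bm _].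
  have -> : (a < m <= b) = false by apply/negbTE/negP => /andP; lia.
  by rewrite andbF.
apply: eq_big_nat => m /andP[h1 h2]; have -> : (a < m <= b) by apply/andP; split; lia. by rewrite andbT.
Qed.

Lemma div_eq_window n m i : 0 < m -> 0 < i ->
  (n %/ m == i) = (n %/ i.+1 < m <= n %/ i).
Proof.
move=> m0 i0; rewrite eqn_leq leq_divRL // -ltnS ltn_divLR // ltn_divLR // leq_divRL //.
apply/idP/idP => /andP[h1 h2]; apply/andP; split; lia.
Qed.

Lemma N_split P n i : 0 < i ->
  \sum_(1 <= m < n.+1) (coprime m P && (n %/ m == i)) + Dc P (n %/ i.+1).+1 = Dc P (n %/ i).+1.
Proof.
move=> i0.
have ab : n %/ i.+1 <= n %/ i by apply: leq_div2l.
have bn : n %/ i <= n by apply: leq_div.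
have -> : \sum_(1 <= m < n.+1) (coprime m P && (n %/ m == i)) =
    \sum_(1 <= m < n.+1) (coprime m P && (n %/ i.+1 < m <= n %/ i)).
  apply: eq_big_nat => m /andP[m1 _]; by rewrite div_eq_window.
rewrite sum_window // /Dc addnC (big_cat_nat _ (n := (n %/ i.+1).+1) (m := 0) (p := (n %/ i).+1)) //=.
Qed.

Lemma NN_eq l n K i : i <= K ->
  NN l n K i = \sum_(1 <= m < n.+1) (coprime m (PP l) && (n %/ m == i)).
Proof.
move=> iK; rewrite /NN /sr big_filter big_mkcond /index_iota subn1 /=.
apply: eq_big_seq => m; rewrite mem_iota => /andP[m1 _].
rewrite coprime_rough //; case: ((piS l)^'.-nat m) => //=.
case e: (n %/ m == i); rewrite ?andbF ?andbT //= /Qs (eqP e) iK.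
by [].
Qed.

From Stdlib Require Import Reals Lra Lia Psatz.
Open Scope R_scope.

Lemma INR_pred (p : nat) : (0 < p)%nat -> INR p.-1 = INR p - 1.
Proof. case: p => // p _; rewrite succnK S_INR; ring. Qed.

Lemma dens_eq l : dens l = INR (totient (PP l)) / INR (PP l).
Proof.
elim: l => [|l IH].
  by rewrite /dens /PP /= big_nil /=; field.
have pp := nth_prime_prime (isT : (0 < l.+1)%nat).
have p0 : 0 < INR (nth_prime l.+1) by apply: lt_0_INR; apply/ltP; exact: prime_gt0.
have P0 : 0 < INR (PP l) by apply: lt_0_INR; apply/ltP; exact: PP_gt0.
rewrite /dens /= -/(dens l) IH PP_S totient_coprime ?coprime_PP_S // (totient_prime pp) -nth_prime_S.
rewrite !mult_INR INR_pred ?prime_gt0 //; field; lra.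
Qed.

Lemma INR_lt_le (a b : nat) : (a < b)%nat -> INR a + 1 <= INR b.
Proof. move=> h; rewrite -S_INR; apply: le_INR; apply/leP; exact: h. Qed.

Lemma INRle (a b : nat) : (a <= b)%nat -> INR a <= INR b.
Proof. move=> h; apply: le_INR; apply/leP; exact: h. Qed.

Lemma le_div (a b c : R) : 0 < c -> a * c <= b -> a <= b / c.
Proof.
move=> c0 h; unfold Rdiv; replace a with (a * c * / c) by (field; lra).
apply: Rmult_le_compat_r => //; apply/Rlt_le/Rinv_0_lt_compat; lra.
Qed.

Lemma div_le (a b c : R) : 0 < c -> b <= a * c -> b / c <= a.
Proof.
move=> c0 h; unfold Rdiv; replace a with (a * c * / c) by (field; lra).
apply: Rmult_le_compat_r => //; apply/Rlt_le/Rinv_0_lt_compat; lra.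
Qed.

Lemma div_lt (a b c : R) : 0 < c -> b < a * c -> b / c < a.
Proof.
move=> c0 h; unfold Rdiv; replace a with (a * c * / c) by (field; lra).
apply: Rmult_lt_compat_r => //; apply/Rinv_0_lt_compat; lra.
Qed.

Section NB.
Variables (l n K i : nat).
Hypothesis (i1 : (1 <= i)%nat) (iK : (i <= K)%nat).
Let P := PP l.
Let phi := totient P.

Lemma N_bounds :
  INR (NN l n K i) <= INR n * expo l i + (2 * INR P + 1) /\
  INR n * expo l i - (2 * INR P + 1) <= INR (NN l n K i).
Proof.
have P0 : (0 < P)%nat := PP_gt0 l.
set a := (n %/ i.+1)%nat; set b := (n %/ i)%nat.
have E1 : (NN l n K i + Dc P a.+1)%nat = Dc P b.+1 by rewrite NN_eq // N_split.
have [E2 E3] := Dc_bounds P0 b.+1.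
have [E4 E5] := Dc_bounds P0 a.+1.
have E6 : (b * i <= n)%nat by apply: leq_trunc_div.
have E7 : (n < b.+1 * i)%nat by apply: ltn_ceil.
have E8 : (a * i.+1 <= n)%nat by apply: leq_trunc_div.
have E9 : (n < a.+1 * i.+1)%nat by apply: ltn_ceil.
have E10 : (phi <= P)%nat by apply: tot_le.
move: E1 => /(congr1 INR); rewrite plus_INR => R1.
move/INRle: E2; rewrite !plus_INR !mult_INR => R2.
move/INRle: E3; rewrite !plus_INR !mult_INR => R3.
move/INRle: E4; rewrite !plus_INR !mult_INR => R4.
move/INRle: E5; rewrite !plus_INR !mult_INR => R5.
move/INRle: E6; rewrite !mult_INR => R6.
move/INR_lt_le: E7; rewrite !mult_INR => R7.
move/INRle: E8; rewrite !mult_INR => R8.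
move/INR_lt_le: E9; rewrite !mult_INR => R9.
move/INRle: E10 => R10.
have Pr : 0 < INR P by apply: lt_0_INR; apply/ltP.
have ir : 1 <= INR i by apply: (INRle i1).
have phi0 : 0 <= INR phi by apply: pos_INR.
rewrite !S_INR in R2 R3 R4 R5 R7 R8 R9.
set N := INR (NN l n K i) in R1 *.
set Da := INR (Dc P a.+1) in R1 R4 R5 *.
set Db := INR (Dc P b.+1) in R1 R2 R3 *.
set x := INR b in R2 R3 R6 R7 *.
set y := INR a in R4 R5 R8 R9 *.
set z := INR n in R6 R7 R8 R9 *.
set ii := INR i in R6 R7 R8 R9 ir *.
set f := INR phi in R2 R3 R4 R5 R10 phi0 *.
set p := INR P in R2 R3 R4 R5 R10 Pr *.
have hup : N * p <= (x - y) * f + 2 * p * p by nra.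
have hlo : (x - y) * f - 2 * p * p <= N * p by nra.
rewrite /expo dens_eq S_INR; change (INR (totient (PP l))) with f; change (INR (PP l)) with p; change (INR i) with ii.
have d0 : 0 <= f / p by apply: Rmult_le_pos => //; apply/Rlt_le/Rinv_0_lt_compat.
have d1 : f / p <= 1 by apply: div_le; lra.
have Nup : N <= (x - y) * (f / p) + 2 * p.
  apply: (Rmult_le_reg_r p) => //; rewrite Rmult_plus_distr_r; field_simplify; [nra | lra].
have Nlo : (x - y) * (f / p) - 2 * p <= N.
  apply: (Rmult_le_reg_r p) => //; rewrite Rmult_minus_distr_r; field_simplify; [nra | lra].
have xy1 : x - y <= z / (ii * (ii + 1)) + 1.
  have : x <= z / ii by apply: le_div; lra.
  have : z / (ii + 1) < y + 1 by apply: div_lt; lra.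
  have -> : z / (ii * (ii + 1)) = z / ii - z / (ii + 1) by field; lra.
  lra.
have xy2 : z / (ii * (ii + 1)) - 1 <= x - y.
  have : z / ii <= x + 1 by apply: div_le; lra.
  have : y <= z / (ii + 1) by apply: le_div; lra.
  have -> : z / (ii * (ii + 1)) = z / ii - z / (ii + 1) by field; lra.
  lra.
have e : z * (/ (ii * (ii + 1)) * (f / p)) = z / (ii * (ii + 1)) * (f / p) by rewrite /Rdiv; ring.
rewrite e; split; nra.
Qed.
End NB.

Lemma INR_expn (m k : nat) : INR (expn m k) = INR m ^ k.
Proof. elim: k => [|k IH] //; rewrite expnS mult_INR IH /=; ring. Qed.

Lemma INR_prod (F : nat -> nat) K :
  INR (\prod_(1 <= i < K.+1) F i)%nat = prod1 (fun i => INR (F i)) K.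
Proof.
elim: K => [|K IH]; first by rewrite big_geq.
by rewrite big_nat_recr //= mult_INR IH.
Qed.

Lemma INR_sum (F : nat -> nat) K :
  INR (\sum_(1 <= i < K.+1) F i)%nat = sum1 (fun i => INR (F i)) K.
Proof.
elim: K => [|K IH]; first by rewrite big_geq.
by rewrite big_nat_recr //= plus_INR IH.
Qed.

Lemma prod1_pos f K : (forall i, (1 <= i)%nat -> (i <= K)%nat -> 0 < f i) -> 0 < prod1 f K.
Proof.
elim: K => [|K IH] h /=; first lra.
apply: Rmult_lt_0_compat; first by apply: IH => i h1 h2; apply: h => //; lia.
by apply: h.
Qed.

Lemma ln_prod1 f K : (forall i, (1 <= i)%nat -> (i <= K)%nat -> 0 < f i) ->
  ln (prod1 f K) = sum1 (fun i => ln (f i)) K.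
Proof.
elim: K => [|K IH] h /=; first exact: ln_1.
rewrite ln_mult ?IH //; first by move=> i h1 h2; apply: h => //; lia.
  by apply: prod1_pos => i h1 h2; apply: h => //; lia.
by apply: h.
Qed.

Lemma prod1_exp f K : prod1 (fun i => exp (f i)) K = exp (sum1 f K).
Proof. elim: K => [|K IH] /=; first by rewrite exp_0. by rewrite IH exp_plus. Qed.

Lemma sum1_le f g K : (forall i, (1 <= i)%nat -> (i <= K)%nat -> f i <= g i) ->
  sum1 f K <= sum1 g K.
Proof.
elim: K => [|K IH] h /=; first lra.
apply: Rplus_le_compat; first by apply: IH => i h1 h2; apply: h => //; lia.
by apply: h.
Qed.

Lemma sum1_lin a b f g K :
  sum1 (fun i => a * f i + b * g i) K = a * sum1 f K + b * sum1 g K.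
Proof. elim: K => [|K IH] /=; first ring. rewrite IH; ring. Qed.

Lemma ln_le' x y : 0 < x -> x <= y -> ln x <= ln y.
Proof. move=> x0 [h|->]; [left; exact: ln_increasing | lra]. Qed.

Lemma exp_le' x y : x <= y -> exp x <= exp y.
Proof. move=> [h|->]; [left; exact: exp_increasing | lra]. Qed.

Lemma ln_ge0 x : 1 <= x -> 0 <= ln x.
Proof. move=> h; rewrite -ln_1; apply: ln_le' => //; lra. Qed.

Lemma NA_pos i P : (0 < n_antichains i P)%nat.
Proof.
rewrite NA_ac; apply/card_gt0P; exists set0.
rewrite inE sub0set /=; apply/forall_inP => x; by rewrite inE.
Qed.

Lemma INR_NA_ge1 i P : 1 <= INR (n_antichains i P).
Proof. have := NA_pos i P; move/INR_lt_le; rewrite /=; lra. Qed.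

Section Final.
Variables (l K : nat).
Hypothesis (hl : (1 <= l)%nat) (hK : (1 <= K)%nat).
Let C := 2 * INR (PP l) + 1.
Let e i := expo l i.
Let lRp i := ln (INR (R'_l l i)).
Let lR i := ln (INR (R_l l i)).
Let M i := INR (card_M l i).

Lemma C_pos : 0 <= C.
Proof. have := pos_INR (PP l); rewrite /C; lra. Qed.


Lemma g_pos n : 0 < INR (g n).
Proof. have := INR_NA_ge1 n (fun _ => true); rewrite /g; lra. Qed.

Lemma lower_ln n :
  INR n * sum1 (fun i => e i * lRp i) K - C * sum1 lRp K <= ln (INR (g n)).
Proof.
have h := lower_nat l n K.
move/INRle: h; rewrite INR_prod => h.
have pos : forall i, (1 <= i)%nat -> (i <= K)%nat -> 0 < INR (expn (R'_l l i) (NN l n K i)).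
  move=> i _ _; rewrite INR_expn; apply: pow_lt; have := INR_NA_ge1 i (fun m => inM l m && (i < m * nth_prime l.+1)%nat); rewrite /R'_l; lra.
have := ln_le' (prod1_pos pos) h; rewrite ln_prod1 //.
apply: Rle_trans.
have -> : INR n * sum1 (fun i => e i * lRp i) K - C * sum1 lRp K =
  INR n * sum1 (fun i => e i * lRp i) K + (- C) * sum1 lRp K by ring.
rewrite -sum1_lin; apply: sum1_le => i i1 iK.
rewrite INR_expn ln_pow; last by have := INR_NA_ge1 i (fun m => inM l m && (i < m * nth_prime l.+1)%nat); rewrite /R'_l; lra.
have [_ lo] := @N_bounds l n K i i1 iK.
have : 0 <= lRp i by apply: ln_ge0; have := INR_NA_ge1 i (fun m => inM l m && (i < m * nth_prime l.+1)%nat); rewrite /R'_l; lra.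
move=> h0; change (lRp i) with (ln (INR (R'_l l i))) in h0 |- *; change (e i) with (expo l i); change C with (2 * INR (PP l) + 1); nra.
Qed.


Lemma ln2_pos : 0 < ln 2.
Proof. have := ln_lt_2; lra. Qed.

Lemma upper_ln n :
  ln (INR (g n)) <= INR n * (sum1 (fun i => e i * lR i) K + (1 - sum1 (fun i => e i * M i) K) * ln 2)
     + C * (sum1 lR K + sum1 M K * ln 2).
Proof.
have h := upper_nat l n K.
move/INRle: h; rewrite !mult_INR !INR_expn INR_prod => h.
have Rge1 : forall i, 1 <= INR (R_l l i) by move=> i; exact: INR_NA_ge1.
have pos : forall i, (1 <= i)%nat -> (i <= K)%nat -> 0 < INR (expn (R_l l i) (NN l n K i)).
  move=> i _ _; rewrite INR_expn; apply: pow_lt; have := Rge1 i; lra.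
have p1 := prod1_pos pos.
have g0 := g_pos n.
have t0 : 0 < INR 2 ^ n by apply: pow_lt; simpl; lra.
have t1 : 0 < INR 2 ^ (\sum_(1 <= i < K.+1) NN l n K i * card_M l i)%nat by apply: pow_lt; simpl; lra.
have := ln_le' (Rmult_lt_0_compat _ _ g0 t1) h.
rewrite !ln_mult // ln_prod1 // !ln_pow; try (simpl; lra).
rewrite INR_sum.
set Y := sum1 _ K; set X := sum1 _ K.
have hX : X <= INR n * sum1 (fun i => e i * lR i) K + C * sum1 lR K.
  rewrite -sum1_lin; apply: sum1_le => i i1 iK.
  rewrite INR_expn ln_pow; last by have := Rge1 i; lra.
  have [up _] := @N_bounds l n K i i1 iK.
  have h0 : 0 <= lR i by apply: ln_ge0.
  change (lR i) with (ln (INR (R_l l i))) in h0 |- *; change (e i) with (expo l i); change C with (2 * INR (PP l) + 1); nra.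
have hY : INR n * sum1 (fun i => e i * M i) K + (- C) * sum1 M K <= Y.
  rewrite -sum1_lin; apply: sum1_le => i i1 iK.
  rewrite mult_INR.
  have [_ lo] := @N_bounds l n K i i1 iK.
  have h0 : 0 <= M i by apply: pos_INR.
  change (M i) with (INR (card_M l i)) in h0 |- *; change (e i) with (expo l i); change C with (2 * INR (PP l) + 1); nra.
have l2 := ln2_pos.
have hY2 : (INR n * sum1 (fun i => e i * M i) K + (- C) * sum1 M K) * ln 2 <= Y * ln 2.
  by apply: Rmult_le_compat_r => //; lra.
simpl (INR 2) in *.
rewrite (_ : 1 + 1 = 2); last by lra. lra.
Qed.
End Final.

Lemma sum1_nonneg f K : (forall i, 0 <= f i) -> 0 <= sum1 f K.
Proof. move=> h; elim: K => [|K IH] /=; [lra | have := h K.+1; lra]. Qed.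

Lemma eventually_small (Mc eps : R) : 0 <= Mc -> (0 < eps)%R ->
  exists N : nat, (0 < N)%nat /\ forall n : nat, (N <= n)%nat -> 0 < INR n /\ Mc * / INR n <= eps.
Proof.
move=> M0 e0.
have e1 : 0 < eps / (Mc + 1) by apply: Rdiv_lt_0_compat; lra.
have [N [hN N0]] := archimed_cor1 _ e1.
exists N; split; first by apply/ltP.
move=> n hn.
have N0' : 0 < INR N by apply: lt_0_INR.
have nN : INR N <= INR n by apply: INRle.
have n0 : 0 < INR n by lra.
split => //.
have : / INR n <= / INR N by apply: Rinv_le_contravar.
move=> h.
have : Mc * / INR n <= Mc * (eps / (Mc + 1)) by apply: Rmult_le_compat_l => //; lra.
have : Mc * (eps / (Mc + 1)) <= eps.
  have -> : Mc * (eps / (Mc + 1)) = eps - eps / (Mc + 1) by field; lra.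
  lra.
lra.
Qed.

Lemma c'_exp l K : c'_lK l K = exp (sum1 (fun i => expo l i * ln (INR (R'_l l i))) K).
Proof. by rewrite /c'_lK /Rpower prod1_exp. Qed.

Lemma c_exp l K : c_lK l K * Rpower 2 (eta_lK l K) =
  exp (sum1 (fun i => expo l i * ln (INR (R_l l i))) K +
       (1 - sum1 (fun i => expo l i * INR (card_M l i)) K) * ln 2).
Proof. by rewrite /c_lK /Rpower prod1_exp -exp_plus /eta_lK. Qed.

Lemma groot_exp n : groot n = exp (/ INR n * ln (INR (g n))).
Proof. by []. Qed.

Theorem mainTheorem10' (l K : nat) (hl : (1 <= l)%nat) (hK : (1 <= K)%nat) :
  (forall eps : R, (0 < eps)%R ->
     exists N : nat, forall n : nat, (N <= n)%nat ->
       (c'_lK l K - eps <= groot n)%R) /\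
  (forall eps : R, (0 < eps)%R ->
     exists N : nat, forall n : nat, (N <= n)%nat ->
       (groot n <= c_lK l K * Rpower 2 (eta_lK l K) + eps)%R).
Proof.
have C0 : 0 <= 2 * INR (PP l) + 1 by have := pos_INR (PP l); lra.
split => eps e0.
- set A := sum1 (fun i => expo l i * ln (INR (R'_l l i))) K.
  set B := sum1 (fun i => ln (INR (R'_l l i))) K.
  have B0 : 0 <= B by apply: sum1_nonneg => i; apply: ln_ge0; exact: INR_NA_ge1.
  set C := 2 * INR (PP l) + 1 in C0.
  have [N [_ hN]] := @eventually_small (exp A * (C * B)) eps (ltac:(apply: Rmult_le_pos; [apply/Rlt_le/exp_pos | nra])) e0.
  exists N => n nN; have [n0 hs] := hN n nN.
  rewrite c'_exp -/A groot_exp.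
  have lo := lower_ln l K n; rewrite -/A -/B -/C in lo.
  have h1 : A - C * B / INR n <= / INR n * ln (INR (g n)).
    have -> : A - C * B / INR n = / INR n * (INR n * A - C * B) by field; lra.
    apply: Rmult_le_compat_l => //; apply/Rlt_le/Rinv_0_lt_compat => //.
  apply: Rle_trans (exp_le' h1).
  rewrite /Rminus exp_plus.
  have h2 := exp_ineq1_le (- (C * B / INR n)).
  have h3 : exp A * (1 + - (C * B / INR n)) <= exp A * exp (- (C * B / INR n)).
    by apply: Rmult_le_compat_l => //; apply/Rlt_le/exp_pos.
  have h4 : exp A * (C * B / INR n) = exp A * (C * B) * / INR n by rewrite /Rdiv; ring.
  nra.
- set A := sum1 (fun i => expo l i * ln (INR (R_l l i))) K +
       (1 - sum1 (fun i => expo l i * INR (card_M l i)) K) * ln 2.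
  set B := sum1 (fun i => ln (INR (R_l l i))) K + sum1 (fun i => INR (card_M l i)) K * ln 2.
  have B0 : 0 <= B.
    have := ln2_pos.
    have : 0 <= sum1 (fun i => ln (INR (R_l l i))) K by apply: sum1_nonneg => i; apply: ln_ge0; exact: INR_NA_ge1.
    have : 0 <= sum1 (fun i => INR (card_M l i)) K by apply: sum1_nonneg => i; apply: pos_INR.
    rewrite /B; nra.
  set C := 2 * INR (PP l) + 1 in C0.
  set T := exp A.
  have T0 : 0 < T by apply: exp_pos.
  set Z := C * B.
  have Z0 : 0 <= Z by rewrite /Z; nra.
  have [N [_ hN]] := @eventually_small (Z * (T + eps)) eps (ltac:(apply: Rmult_le_pos; lra)) e0.
  exists N => n nN; have [n0 hs] := hN n nN.
  rewrite c_exp -/A -/T groot_exp.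
  have up := upper_ln l K n; rewrite -/A -/B -/C -/Z in up.
  set x := Z / INR n.
  have x0 : 0 <= x by rewrite /x /Rdiv; apply: Rmult_le_pos => //; apply/Rlt_le/Rinv_0_lt_compat.
  have hx : x * (T + eps) <= eps.
    have e : x * (T + eps) = Z * (T + eps) * / INR n by rewrite /x /Rdiv; ring.
    by rewrite e.
  have h1 : / INR n * ln (INR (g n)) <= A + x.
    have -> : A + x = / INR n * (INR n * A + Z) by rewrite /x; field; lra.
    apply: Rmult_le_compat_l => //; apply/Rlt_le/Rinv_0_lt_compat => //.
  apply: Rle_trans (exp_le' h1) _.
  rewrite exp_plus -/T.
  have x1 : x < 1.
    have : x * T <= x * (T + eps) - x * eps by lra.
    nra.
  have h2 := exp_ineq1_le (- x).
  have h3 : exp x * exp (- x) = 1 by rewrite -exp_plus Rplus_opp_r exp_0.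
  have h4 : 0 < exp x by apply: exp_pos.
  have h5 : exp x * (1 - x) <= 1 by nra.
  nra.
Qed.

Close Scope R_scope.
Unset Implicit Arguments.

Theorem mainTheorem10 (l K : nat) (hl : (1 <= l)%N) (hK : (1 <= K)%N) :
  (forall eps : R, (0 < eps)%R ->
     exists N : nat, forall n : nat, (N <= n)%N ->
       (c'_lK l K - eps <= groot n)%R) /\
  (forall eps : R, (0 < eps)%R ->
     exists N : nat, forall n : nat, (N <= n)%N ->
       (groot n <= c_lK l K * Rpower 2 (eta_lK l K) + eps)%R).
Proof. exact: mainTheorem10'. Qed.
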